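(* For every $M$ with $0\le M<\frac12$, every deterministic semi-online algorithm with migration factor $M$ for scheduling on two hierarchical machines with known optimal makespan (bin stretching) has competitive ratio at least $\frac32$.
   Context: Model (two hierarchical machines with migration, bin stretching). Jobs $1,2,\dots,n$ arrive one by one ($n$ unknown in advance). Job $j$ has a size $p_j>0$ and a grade of service (GoS) $g_j\in\{1,2\}$; a job of GoS $1$ may only be processed on machine $m_1$, a job of GoS $2$ may be processed on $m_1$ or on $m_2$. The load of a machine is the total size of its jobs, the makespan is the maximum load. When job $j$ arrives, the algorithm must assign it, and may migrate previously arrived jobs (respecting GoS) of total size at most $M\cdot p_j$ (migration factor $M$). Bin stretching: the optimal offline makespan of the complete input is known in advance to the algorithm (scaled to $1$). The competitive ratio is the supremum over inputs of (algorithm's makespan)/(optimal makespan). *)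

(* Defs.v *)
From HB Require Import structures.
From mathcomp Require Import all_boot all_order all_algebra.
From mathcomp Require Import reals.
Set Implicit Arguments. Unset Strict Implicit. Unset Printing Implicit Defensive.
Import Order.TTheory GRing.Theory Num.Theory.
Local Open Scope ring_scope.

(* Grade of service of a job: GoS 1 (only m1) or GoS 2 (m1 or m2). *)
Inductive gos := GoS1 | GoS2.
Inductive machine := m1 | m2.

Definition machine_eqb (a b : machine) : bool :=
  match a, b with m1, m1 | m2, m2 => true | _, _ => false end.

Section Sched.
Variable R : realType.

Record job := Job { jsize : R ; jgos : gos }.

Definition dummy_job : job := Job 0 GoS1.

Definition jnth (s : seq job) (i : nat) : job := nth dummy_job s i.

Definition sizes_pos (s : seq job) : Prop :=
  forall i, (i < size s)%N -> 0 < jsize (jnth s i).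

(* An assignment maps the index (position in arrival order, from 0) of
   each job to a machine. It respects GoS on the jobs of s. *)
Definition respects_gos (s : seq job) (a : nat -> machine) : Prop :=
  forall i, (i < size s)%N -> jgos (jnth s i) = GoS1 -> a i = m1.

Definition load (s : seq job) (a : nat -> machine) (m : machine) : R :=
  \sum_(i < size s) (if machine_eqb (a i) m then jsize (jnth s i) else 0).

Definition makespan (s : seq job) (a : nat -> machine) : R :=
  Num.max (load s a m1) (load s a m2).

Definition migrated (s : seq job) (a a' : nat -> machine) : R :=
  \sum_(i < size s) (if machine_eqb (a i) (a' i) then 0 else jsize (jnth s i)).

Definition opt_is_one (s : seq job) : Prop :=
  (exists a, respects_gos s a /\ makespan s a <= 1) /\
  (forall a, respects_gos s a -> 1 <= makespan s a).

(* A deterministic semi-online algorithm is a function of the history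
   (the sequence of jobs arrived so far, the last one being the new job)
   returning the assignment of all jobs arrived so far. *)
Definition algorithm := seq job -> (nat -> machine).

Definition is_migration_algorithm (M : R) (A : algorithm) : Prop :=
  forall (s : seq job) (j : job), sizes_pos (rcons s j) ->
    respects_gos (rcons s j) (A (rcons s j)) /\
    migrated s (A s) (A (rcons s j)) <= M * jsize j.

End Sched.

(* Main.v *)
Require Import Defs.
From HB Require Import structures.
From mathcomp Require Import all_boot all_order all_algebra.
From mathcomp Require Import reals.
From mathcomp Require Import lra.
Import Order.TTheory GRing.Theory Num.Theory.
Local Open Scope ring_scope.

Definition h2 (R : realType) : job R := Job (1/2) GoS2.
Definition o2 (R : realType) : job R := Job 1 GoS2.
Definition h1 (R : realType) : job R := Job (1/2) GoS1.
Definition o1 (R : realType) : job R := Job 1 GoS1.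

Ltac expand := rewrite /makespan /migrated /load /respects_gos /h2 /o2 /h1 /o1 /=
  ?big_ord_recr ?big_ord0 /= /jnth /=.

Ltac expand2 := rewrite /makespan /migrated /load /respects_gos /=
  ?big_ord_recr ?big_ord0 /= /jnth /=.

Ltac fin := rewrite ?le_max ?ge_max ?lt_max /=;
  first [ lra | (apply/andP; split; lra) | (apply/orP; left; lra)
        | (apply/orP; right; lra) ].

Section S.
Variable R : realType.

Lemma opt1 : opt_is_one [:: h2 R; o2 R].
Proof.
split.
  exists (fun i => if i == 0%N then m1 else m2); split.
    by move=> i; case: i => [|[|]].
  expand; fin.
move=> a _; expand.
case: (a 0%N); case: (a 1%N) => /=; fin.
Qed.

Lemma opt2 : opt_is_one [:: h2 R; o2 R; h1 R].
Proof.
split.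
  exists (fun i => if i == 1%N then m2 else m1); split.
    by move=> i; case: i => [|[|[|]]].
  expand; fin.
move=> a _; expand.
case: (a 0%N); case: (a 1%N); case: (a 2%N) => /=; fin.
Qed.

Lemma opt3 : opt_is_one [:: h2 R; h2 R; o1 R].
Proof.
split.
  exists (fun i => if i == 2%N then m1 else m2); split.
    by move=> i; case: i => [|[|[|]]].
  expand; fin.
move=> a _; expand.
case: (a 0%N); case: (a 1%N); case: (a 2%N) => /=; fin.
Qed.
End S.

Theorem mainTheorem16 (R : realType) (M : R) :
  0 <= M -> M < 1 / 2 ->
  forall A : algorithm R, is_migration_algorithm M A ->
  forall c : R, c < 3 / 2 ->
  exists s : seq (job R),
    sizes_pos s /\ opt_is_one s /\ c < makespan s (A s).
Proof.
move=> M0 Mh A HA c hc.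
case E1: (A [:: h2 R] 0%N).
- have P2 : sizes_pos (rcons [:: h2 R] (h2 R)).
    move=> i; rewrite /=; case: i => [|[|]] //= _; rewrite /jnth /=; lra.
  have P3 : sizes_pos (rcons [:: h2 R; h2 R] (o1 R)).
    move=> i; rewrite /=; case: i => [|[|[|]]] //= _; rewrite /jnth /=; lra.
  have [_ H2] := HA _ _ P2.
  have [G3 H3] := HA _ _ P3.
  have e20 : A [:: h2 R; h2 R] 0%N = m1.
    move: H2; expand2; rewrite E1.
    case: (A [:: h2 R; h2 R] 0%N) => /= h; [done | exfalso; lra].
  have e30 : A [:: h2 R; h2 R; o1 R] 0%N = m1.
    move: H3; expand2; rewrite e20.
    case: (A [:: h2 R; h2 R; o1 R] 0%N) => //=;
      case: (A [:: h2 R; h2 R] 1%N); case: (A [:: h2 R; h2 R; o1 R] 1%N) => /= h; exfalso; lra.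
  have e32 : A [:: h2 R; h2 R; o1 R] 2%N = m1 by apply: G3.
  exists [:: h2 R; h2 R; o1 R]; split; first exact: P3.
  split; first exact: opt3.
  expand2; rewrite e30 e32 /=.
  case: (A [:: h2 R; h2 R; o1 R] 1%N) => /=; fin.
- have P2 : sizes_pos (rcons [:: h2 R] (o2 R)).
    move=> i; rewrite /=; case: i => [|[|]] //= _; rewrite /jnth /=; lra.
  have [_ H2] := HA _ _ P2.
  have e20 : A [:: h2 R; o2 R] 0%N = m2.
    move: H2; expand2; rewrite E1.
    case: (A [:: h2 R; o2 R] 0%N) => /= h; [exfalso; lra | done].
  case E21: (A [:: h2 R; o2 R] 1%N).
  + have P3 : sizes_pos (rcons [:: h2 R; o2 R] (h1 R)).
      move=> i; rewrite /=; case: i => [|[|[|]]] //= _; rewrite /jnth /=; lra.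
    have [G3 H3] := HA _ _ P3.
    have e31 : A [:: h2 R; o2 R; h1 R] 1%N = m1.
      move: H3; expand2; rewrite e20 E21.
      case: (A [:: h2 R; o2 R; h1 R] 1%N) => //=;
        case: (A [:: h2 R; o2 R; h1 R] 0%N) => /= h; exfalso; lra.
    have e32 : A [:: h2 R; o2 R; h1 R] 2%N = m1 by apply: G3.
    exists [:: h2 R; o2 R; h1 R]; split; first exact: P3.
    split; first exact: opt2.
    expand2; rewrite e31 e32 /=.
    case: (A [:: h2 R; o2 R; h1 R] 0%N) => /=; fin.
  + exists [:: h2 R; o2 R]; split; first exact: P2.
    split; first exact: opt1.
    expand2; rewrite e20 E21 /=; fin.
Qed.
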